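(* Let $n\ge1$ and $1\le k\le n$. Let $\alpha_k$ be the number of pairs $(P,i)$ where $P=(a_0,a_1,\dots,a_{2n})$ is a Dyck path of length $2n$ (i.e., $a_0=a_{2n}=0$, $a_j\ge0$ and $|a_j-a_{j-1}|=1$ for all $j$) and $0\le i\le 2n-1$ is an index with $a_i=k$ and $a_{i+1}=k-1$. Then \[ \alpha_k=\binom{2n}{n-k}-\binom{2n}{n-k-1}, \] with the convention $\binom{2n}{-1}=0$. *)

(* Defs.v *)
From mathcomp Require Import all_boot all_order all_algebra.
Set Implicit Arguments. Unset Strict Implicit. Unset Printing Implicit Defensive.

(* Heights of a Dyck path are automatically <= 2n, so no generality is lost.
   Heights are natural numbers, so a_j >= 0 holds by typing. *)
Definition path_ty (n : nat) := {ffun 'I_(2 * n).+1 -> 'I_(2 * n).+1}.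

(* value of the path at position j (0 if j is out of range; never used there) *)
Definition hgt n (a : path_ty n) (j : nat) : nat :=
  match insub j with Some j' => nat_of_ord (a j') | None => 0 end.

Definition is_dyck n (a : path_ty n) : bool :=
  [&& hgt a 0 == 0, hgt a (2 * n) == 0 &
      [forall j : 'I_(2 * n), (hgt a j.+1 == (hgt a j).+1) || (hgt a j == (hgt a j.+1).+1)]].

Definition alpha (n k : nat) : nat :=
  #|[set Pi : path_ty n * 'I_(2 * n) |
      [&& is_dyck Pi.1, hgt Pi.1 Pi.2 == k & hgt Pi.1 Pi.2.+1 == k.-1]]|.

Definition binomZ (m : nat) (j : int) : int :=
  match j with Posz j' => ('C(m, j'))%:Z | Negz _ => 0 end.

(* Main.v *)
Require Import Defs.
From mathcomp Require Import all_boot all_order all_algebra.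
From mathcomp Require Import zify ring lra.
Import GRing.Theory.
Set Implicit Arguments. Unset Strict Implicit. Unset Printing Implicit Defensive.

Fixpoint cw (m : nat) (d : int) : nat :=
  match m with 0 => (d == 0%R) | m'.+1 => cw m' (d - 1)%R + cw m' (d + 1)%R end.

Lemma cw_sym m d : cw m (- d)%R = cw m d.
Proof.
elim: m d => [|m IH] d /=; first by rewrite oppr_eq0.
have -> : (- d - 1 = - (d + 1))%R by ring.
have -> : (- d + 1 = - (d - 1))%R by ring.
by rewrite !IH addnC.
Qed.

Lemma cw_big m d : (m%:Z < d)%R -> cw m d = 0.
Proof.
elim: m d => [|m IH] d /= H; first by apply/eqP; lia.
rewrite !IH //; lia.
Qed.

Lemma cw_bin m j : cw m (m%:Z - 2 * j%:Z)%R = 'C(m, j).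
Proof.
elim: m j => [|m IH] j /=.
  rewrite bin0n; case: j => [|j] //=.
case: j => [|j].
  have -> : ((m.+1)%:Z - 2 * 0%:Z - 1 = m%:Z - 2 * 0%:Z)%R by lia.
  rewrite IH cw_big ?bin0 //; lia.
have -> : ((m.+1)%:Z - 2 * (j.+1)%:Z - 1 = m%:Z - 2 * (j.+1)%:Z)%R by lia.
have -> : ((m.+1)%:Z - 2 * (j.+1)%:Z + 1 = m%:Z - 2 * j%:Z)%R by lia.
by rewrite !IH binS addnC.
Qed.

Definition cn m (d : nat) := cw m d%:Z.

Lemma cnP m d d1 d2 : d = d1.+1 -> d2 = d.+1 -> cn m.+1 d = cn m d1 + cn m d2.
Proof.
move=> -> ->; rewrite /cn /=.
have -> : ((d1.+1)%:Z - 1 = d1%:Z)%R by lia.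
by have -> : ((d1.+1)%:Z + 1 = (d1.+2)%:Z)%R by lia.
Qed.

Lemma cn0 m : cn m.+1 0 = 2 * cn m 1.
Proof.
by rewrite /cn /= sub0r add0r cw_sym mul2n -addnn.
Qed.

Lemma cn0pos d : 0 < d -> cn 0 d = 0.
Proof. by rewrite /cn /=; case: d. Qed.

Definition e (x y : nat) : bool := (y == x.+1) || (x == y.+1).

Fixpoint tw (m h : nat) : seq (seq nat) :=
  match m with 0 => [:: [::]]
  | m'.+1 => [seq h.+1 :: t | t <- tw m' h.+1] ++
             (if h is h'.+1 then [seq h' :: t | t <- tw m' h'] else [::]) end.

Fixpoint mk (k p : nat) (l : seq nat) : nat :=
  match l with [::] => 0 | x :: r => ((p == k) && (x == k.-1)) + mk k x r end.

Definition Aw k m h := \sum_(t <- tw m h) ((last h t == 0) * mk k h t).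
Definition Nw m h := \sum_(t <- tw m h) (last h t == 0 : nat).

Lemma Nw0 h : Nw 0 h = (h == 0).
Proof. by rewrite /Nw big_cons big_nil addn0. Qed.

Lemma NwS m h : Nw m.+1 h = Nw m h.+1 + (if h is h'.+1 then Nw m h' else 0).
Proof.
rewrite /Nw /= big_cat big_map; congr (_ + _).
by case: h => [|h]; rewrite ?big_nil // big_map.
Qed.

Lemma Aw0 k h : Aw k 0 h = 0.
Proof. by rewrite /Aw big_cons big_nil muln0. Qed.

Lemma AwS k m h : 0 < k -> Aw k m.+1 h =
  Aw k m h.+1 + (if h is h'.+1 then Aw k m h' + (h == k) * Nw m h' else 0).
Proof.
move=> k0; rewrite /Aw /= big_cat big_map; congr (_ + _).
  apply: eq_bigr => t _ /=.
  have -> : ((h == k) && (h.+1 == k.-1)) = false by apply/negP => /andP [/eqP a /eqP b]; lia.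
  by [].
case: h => [|h]; rewrite ?big_nil // big_map.
have -> : \sum_(i <- tw m h) ((last h.+1 (h :: i) == 0) * mk k h.+1 (h :: i)) =
  \sum_(i <- tw m h) ((last h i == 0) * mk k h i + (h.+1 == k) * (last h i == 0)).
  apply: eq_bigr => t _ /=.
  have -> : ((h.+1 == k) && (h == k.-1)) = (h.+1 == k).
    by case: (h.+1 =P k) => //= <-; rewrite eqxx.
  by rewrite mulnDr addnC; congr (_ + _); rewrite mulnC.
by rewrite big_split /= /Nw big_distrr.
Qed.

Lemma Nw_closed m g : ((Nw m g)%:Z = (cn m g)%:Z - (cn m g.+2)%:Z)%R.
Proof.
elim: m g => [|m IH] g.
  rewrite Nw0 /cn /=; case: g => [|g] //.
rewrite NwS; case: g => [|g].
  rewrite addn0 IH cn0 (@cnP m 2 1 3) //; lia.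
rewrite (@cnP m g.+1 g g.+2) // (@cnP m g.+3 g.+2 g.+4) //.
have := IH g.+2; have := IH g; lia.
Qed.

Definition Fz k m h : int :=
  if h <= k then ((cn m (2*k - h)%N)%:Z - (cn m (2*k+h+2)%N)%:Z)%R
  else ((cn m h)%:Z - (cn m (2*k+h+2)%N)%:Z)%R.

Lemma Aw_closed k m h : 0 < k -> ((Aw k m h)%:Z = Fz k m h)%R.
Proof.
move=> k0; elim: m h => [|m IH] h.
  rewrite Aw0 /Fz; case: leqP => H; rewrite !cn0pos //; lia.
rewrite AwS //; case: h => [|h].
  rewrite addn0 IH /Fz k0 leq0n.
  rewrite (@cnP m (2*k-0) (2*k-1) (2*k+1)); try lia.
  rewrite (@cnP m (2*k+0+2) (2*k+1) (2*k+1+2)); try lia.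
have I1 := IH h.+2; have I2 := IH h; have I3 := Nw_closed m h.
move: I1 I2; rewrite /Fz.
case: (leqP h.+2 k) => H1; case: (leqP h k) => H2; case: (leqP h.+1 k) => H3; try lia.
- rewrite (@cnP m (2*k-h.+1) (2*k-h.+2) (2*k-h)); try lia.
  rewrite (@cnP m (2*k+h.+1+2) (2*k+h+2) (2*k+h.+2+2)); lia.
- have E : k = h.+1 by lia.
  rewrite (@cnP m (2*k-h.+1) h h.+2); try lia.
  rewrite (@cnP m (2*k+h.+1+2) (2*k+h+2) (2*k+h.+2+2)); try lia.
  have -> : 2 * k - h = h.+2 by lia.
  lia.
- have E : k = h by lia.
  rewrite (@cnP m h.+1 h h.+2); try lia.
  rewrite (@cnP m (2*k+h.+1+2) (2*k+h+2) (2*k+h.+2+2)); try lia.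
  have -> : 2 * k - h = h by lia.
  lia.
- rewrite (@cnP m h.+1 h h.+2); try lia.
  rewrite (@cnP m (2*k+h.+1+2) (2*k+h+2) (2*k+h.+2+2)); lia.
Qed.

Lemma hgtE n (P : path_ty n) j (Hj : j < (2*n).+1) : hgt P j = P (Ordinal Hj).
Proof.
rewrite /hgt; case: insubP => [u _ Hu|/negP //].
by congr (nat_of_ord (P _)); apply: val_inj.
Qed.

Lemma hgt_ord n (P : path_ty n) (j : 'I_(2*n).+1) : hgt P j = P j.
Proof. by rewrite (hgtE P (ltn_ord j)); congr (nat_of_ord (P _)); apply: val_inj. Qed.

Definition hs n (P : path_ty n) := [seq hgt P j | j <- iota 1 (2*n)].

Lemma size_hs n (P : path_ty n) : size (hs P) = 2*n.
Proof. by rewrite size_map size_iota. Qed.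

Lemma nth_hs n (P : path_ty n) i : i < 2*n -> nth 0 (hs P) i = hgt P i.+1.
Proof. by move=> Hi; rewrite (nth_map 0) ?size_iota // nth_iota // add1n. Qed.

Lemma nth0_hs n (P : path_ty n) i : is_dyck P -> i <= 2*n -> nth 0 (0 :: hs P) i = hgt P i.
Proof.
move=> /and3P [/eqP H0 _ _]; case: i => [|i] Hi /=; first by rewrite H0.
by rewrite nth_hs.
Qed.

Lemma dyck_hs n (P : path_ty n) : is_dyck P ->
  [&& last 0 (hs P) == 0, size (hs P) == 2*n & path e 0 (hs P)].
Proof.
move=> D; rewrite size_hs eqxx /=.
have [_ /eqP HN /forallP F] := and3P D.
apply/andP; split.
  by rewrite (last_nth 0) size_hs nth0_hs // HN.
apply/(pathP 0) => i; rewrite size_hs => Hi.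
rewrite (nth0_hs D (ltnW Hi)) (nth_hs P Hi).
exact: (F (Ordinal Hi)).
Qed.

Lemma path_bound h t : path e h t -> forall i, nth 0 (h :: t) i <= h + i.
Proof.
elim: t h => [|x t IH] h /=.
  by move=> _ [|i]; rewrite /= ?nth_nil ?addn0.
move=> /andP [Ex Hp] [|i] /=; first by rewrite addn0.
have := IH x Hp i; move: Ex; rewrite /e; case/orP => /eqP ->; lia.
Qed.

Lemma hs_surj n t : size t = 2*n -> path e 0 t -> last 0 t == 0 ->
  exists2 P : path_ty n, is_dyck P & hs P = t.
Proof.
move=> Hs Hp Hl.
have B : forall j, nth 0 (0::t) j <= j by move=> j; have := path_bound Hp j.
pose P : path_ty n := [ffun j : 'I_(2*n).+1 => inord (nth 0 (0::t) j)].
have HP : forall j, j <= 2*n -> hgt P j = nth 0 (0::t) j.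
  move=> j Hj; have Hj' : j < (2*n).+1 by rewrite ltnS.
  rewrite (hgtE P Hj') ffunE /= inordK //.
  rewrite ltnS; exact: leq_trans (B j) Hj.
exists P.
  apply/and3P; split.
  - by rewrite HP.
  - by rewrite HP // -Hs -(last_nth 0).
  - apply/forallP => j; rewrite !HP ?(ltnW (ltn_ord j)) ?ltn_ord //.
    have := (pathP 0 Hp) j; rewrite Hs ltn_ord; move=> /(_ isT).
    by [].
apply: (@eq_from_nth _ 0); rewrite size_hs ?Hs // => i Hi.
by rewrite nth_hs // HP.
Qed.

Lemma hs_inj n (P Q : path_ty n) : is_dyck P -> is_dyck Q -> hs P = hs Q -> P = Q.
Proof.
move=> DP DQ E; apply/ffunP => j; apply: val_inj => /=.
rewrite -!hgt_ord; case: j => [[|j] Hj] /=.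
  by have [/eqP -> _ _] := and3P DP; have [/eqP -> _ _] := and3P DQ.
by rewrite -!nth_hs ?E.
Qed.

Lemma mem_cons_map (x y : nat) s L : (x :: s \in [seq y :: t | t <- L]) = (x == y) && (s \in L).
Proof.
apply/mapP/andP => [[t Ht [-> ->]]|[/eqP -> Hs]]; first by rewrite eqxx.
by exists s.
Qed.

Lemma nil_notin (y : nat) L : ([::] \in [seq y :: t | t <- L]) = false.
Proof. by apply/mapP => [[]]. Qed.

Lemma tw_mem m h t : (t \in tw m h) = (size t == m) && path e h t.
Proof.
elim: m h t => [|m IH] h t /=.
  by case: t.
rewrite mem_cat; case: t => [|x t] /=.
  by case: h => [|h]; rewrite !nil_notin.
rewrite mem_cons_map IH eqSS.
case: h => [|h] /=.
  rewrite [e _ x]/e /= orbF; case: (x =P 1) => [->|] //=; by rewrite andbF.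
rewrite mem_cons_map IH [e _ x]/e.
case: (x =P h.+2) => [->|Hx] /=.
  have -> : (h.+2 == h) = false by lia.
  by rewrite orbF.
case: (x =P h) => [->|Hy] /=; first by rewrite eqxx.
rewrite eqSS; case: (h =P x) => [E|] /=; last by rewrite andbF.
by case: Hy.
Qed.

Lemma tw_uniq m h : uniq (tw m h).
Proof.
elim: m h => [|m IH] h //=.
rewrite cat_uniq map_inj_uniq ?IH; last by move=> a b [].
case: h => [|h] /=; first by [].
rewrite map_inj_uniq ?IH ?andbT; last by move=> a b [].
apply/hasPn => t /mapP [u _ ->]; rewrite mem_cons_map.
by have -> : (h == h.+2) = false by lia.
Qed.

Lemma mkE k p t m : size t = m ->
  mk k p t = \sum_(i < m) ((nth 0 (p :: t) i == k) && (nth 0 (p :: t) i.+1 == k.-1)).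
Proof.
move=> <-; elim: t p => [|x t IH] p /=; first by rewrite big_ord0.
rewrite big_ord_recl IH; congr (_ + _).
Qed.

Lemma alpha_sum n k : alpha n k = \sum_(P : path_ty n | is_dyck P) mk k 0 (hs P).
Proof.
rewrite /alpha -sum1_card big_mkcond /=.
set S := [set Pi : path_ty n * 'I_(2 * n) | _].
pose G := fun p : path_ty n * 'I_(2 * n) => if p \in S then 1 else 0.
have -> : \sum_(p : path_ty n * 'I_(2 * n)) (if p \in S then 1 else 0) =
    \sum_(P : path_ty n) \sum_(i : 'I_(2 * n)) G (P, i).
  by rewrite (pair_bigA _ (fun P i => G (P, i))); apply: eq_bigr => [[]].
rewrite [RHS]big_mkcond /=; apply: eq_bigr => P _.
case: (boolP (is_dyck P)) => D.
  rewrite (mkE k 0 (size_hs P)); apply: eq_bigr => i _.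
  rewrite /G inE /= D /= (nth0_hs D (ltnW (ltn_ord i))) /= (nth_hs P (ltn_ord i)).
  by case: (_ && _).
by apply: big1 => i _; rewrite /G inE /= (negbTE D).
Qed.

Lemma transfer n (f : seq nat -> nat) :
  \sum_(P : path_ty n | is_dyck P) f (hs P) = \sum_(t <- tw (2*n) 0 | last 0 t == 0) f t.
Proof.
transitivity (\sum_(t <- [seq hs P | P <- [seq x <- index_enum (path_ty n) | is_dyck x]]) f t).
  by rewrite big_map big_filter.
rewrite -[RHS]big_filter.
apply: perm_big; apply: uniq_perm.
- rewrite map_inj_in_uniq ?filter_uniq ?index_enum_uniq //.
  move=> P Q; rewrite !mem_filter => /andP [DP _] /andP [DQ _]; exact: hs_inj.
- by rewrite filter_uniq ?tw_uniq.
- move=> t; rewrite mem_filter tw_mem; apply/mapP/idP.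
  + by move=> [P]; rewrite mem_filter => /andP [D _] ->; apply: dyck_hs.
  + move=> /and3P [Hl /eqP Hs Hp].
    have [P D <-] := hs_surj Hs Hp Hl.
    by exists P; rewrite // mem_filter D mem_index_enum.
Qed.

Lemma binomZ_pos m j : binomZ m (Posz j) = 'C(m, j). Proof. by []. Qed.
Lemma binomZ_neg m : binomZ m (Negz 0) = 0%R. Proof. by []. Qed.

Local Open Scope ring_scope.

Theorem mainTheorem12 (n k : nat) (hn : (1 <= n)%N) (hk1 : (1 <= k)%N) (hkn : (k <= n)%N) :
  (alpha n k)%:Z = binomZ (2 * n) (n%:Z - k%:Z) - binomZ (2 * n) (n%:Z - k%:Z - 1).
Proof.
rewrite alpha_sum.
have -> : (\sum_(P : path_ty n | is_dyck P) mk k 0 (hs P) = Aw k (2*n) 0)%N.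
  rewrite transfer /Aw big_mkcond /=; apply: eq_bigr => t _.
  by case: (last 0 t == 0)%N; rewrite ?mul1n ?mul0n.
rewrite Aw_closed // /Fz leq0n subn0 addn0 /cn.
have -> : n%:Z - k%:Z = (n - k)%N%:Z by lia.
rewrite binomZ_pos.
have -> : Posz (2 * k)%N = (2 * n)%N%:Z - 2 * (n - k)%N%:Z by lia.
rewrite cw_bin.
case: (ltnP k n) => H.
  have -> : (n - k)%N%:Z - 1 = (n - k - 1)%N%:Z by lia.
  have -> : Posz (2 * k + 2)%N = (2 * n)%N%:Z - 2 * (n - k - 1)%N%:Z by lia.
  by rewrite cw_bin binomZ_pos.
have -> : (n - k)%N%:Z - 1 = Negz 0 by have -> : (n - k = 0)%N by lia.
rewrite binomZ_neg cw_big //; lia.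
Qed.
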